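(* Let $\Gamma=(V,E)$ be a finite, simple, acyclic, modular directed graph, and let $H\subseteq E$ be a set of edges that is ample and connected. Then $H$ is sufficient, i.e. the completion $\hat H$ of $H$ contains a directed path from a source of $\Gamma$ to a sink of $\Gamma$.
   Context: A directed graph $\Gamma=(V,E)$ assigns to each edge $e$ a tail $t(e)$ and a head $h(e)$; it is simple if edges with the same tail and head coincide, and acyclic if it has no directed path of positive length from a vertex to itself. A directed (positive) path is a sequence of edges $e_1,\dots,e_k$ with $t(e_{i+1})=h(e_i)$; a vertex is regarded as joined to itself by the path of length $0$. A source is a vertex that is the head of no edge; a sink is a vertex that is the tail of no edge. $\Gamma$ is modular if (1) for any two distinct edges $e_1,e_2$ with a common tail there exist edges $f_1,f_2$ with a common head and $h(e_i)=t(f_i)$, $i=1,2$; and (2) for any two distinct edges $h_1,h_2$ with a common head there exist edges $g_1,g_2$ with a common tail and $h(g_i)=t(h_i)$, $i=1,2$. D-operation: from a pair of distinct edges $e_1,e_2$ with a common tail, any pair of edges $f_1,f_2$ with a common head and $h(e_i)=t(f_i)$ is obtained. U-operation: from a pair of distinct edges $f_1',f_2'$ with a common head, any pair $e_1',e_2'$ with a common tail and $h(e_i')=t(f_i')$ is obtained. A set $E_0\subseteq E$ is complete if every result of any D- or U-operation applied to edges of $E_0$ lies in $E_0$; the completion $\hat F$ of $F\subseteq E$ is the smallest complete set containing $F$. A set of edges is sufficient if its completion contains a directed path all of whose edges lie in it, from a source to a sink of $\Gamma$. For $G\subseteq E$ let $V(G)$ be the set of heads and tails of edges in $G$. A set $W\subseteq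 V$ is ample if (1) for every non-sink vertex $v$ there is $u\in W$ such that there is no directed path in $\Gamma$ from $u$ to $v$, and (2) for every non-source vertex $v$ there is $w\in W$ such that there is no directed path in $\Gamma$ from $v$ to $w$; a set of edges $G$ is ample if $V(G)$ is ample. A set of edges $G$ is connected if the undirected graph with vertex set $V(G)$ and edge set $G$ (directions forgotten) is connected. *)

(* Defs.v *)
From mathcomp Require Import all_boot.
From Stdlib Require Import Relations.Relation_Operators.
Set Implicit Arguments. Unset Strict Implicit. Unset Printing Implicit Defensive.

Section DiGraph.
Variables (V E : finType) (t h : E -> V).

Definition dstep (u v : V) : Prop := exists e, t e = u /\ h e = v.
Definition reach (u v : V) : Prop := clos_refl_trans V dstep u v.

Definition simple_graph : Prop :=
  forall e1 e2 : E, t e1 = t e2 -> h e1 = h e2 -> e1 = e2.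
Definition acyclic : Prop := forall v : V, ~ clos_trans V dstep v v.

Definition is_source (v : V) : Prop := forall e : E, h e <> v.
Definition is_sink (v : V) : Prop := forall e : E, t e <> v.

Definition modular : Prop :=
  (forall e1 e2 : E, e1 <> e2 -> t e1 = t e2 ->
     exists f1 f2 : E, h f1 = h f2 /\ h e1 = t f1 /\ h e2 = t f2) /\
  (forall h1 h2 : E, h1 <> h2 -> h h1 = h h2 ->
     exists g1 g2 : E, t g1 = t g2 /\ h g1 = t h1 /\ h g2 = t h2).

(* closure under D- and U-operations *)
Definition complete (E0 : {set E}) : Prop :=
  (forall e1 e2 f1 f2 : E, e1 \in E0 -> e2 \in E0 -> e1 <> e2 -> t e1 = t e2 ->
     h f1 = h f2 -> h e1 = t f1 -> h e2 = t f2 -> f1 \in E0 /\ f2 \in E0) /\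
  (forall f1 f2 e1 e2 : E, f1 \in E0 -> f2 \in E0 -> f1 <> f2 -> h f1 = h f2 ->
     t e1 = t e2 -> h e1 = t f1 -> h e2 = t f2 -> e1 \in E0 /\ e2 \in E0).

Definition in_completion (F : {set E}) (e : E) : Prop :=
  forall E0 : {set E}, F \subset E0 -> complete E0 -> e \in E0.

Definition consec (a b : E) : bool := h a == t b.

Definition sufficient (F : {set E}) : Prop :=
  exists (e : E) (s : seq E),
    path consec e s /\ is_source (t e) /\ is_sink (h (last e s)) /\
    (forall x, x \in e :: s -> in_completion F x).

Definition vert_of (G : {set E}) (v : V) : Prop :=
  exists2 e, e \in G & (t e = v \/ h e = v).

Definition ample_vset (W : V -> Prop) : Prop :=
  (forall v, ~ is_sink v -> exists u, W u /\ ~ reach u v) /\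
  (forall v, ~ is_source v -> exists w, W w /\ ~ reach v w).

Definition ample (G : {set E}) : Prop := ample_vset (vert_of G).

Definition ustep (G : {set E}) (u v : V) : Prop :=
  exists2 e, e \in G & ((t e = u /\ h e = v) \/ (t e = v /\ h e = u)).

Definition connected (G : {set E}) : Prop :=
  (exists v, vert_of G v) /\
  (forall u v, vert_of G u -> vert_of G v -> clos_refl_trans V (ustep G) u v).

End DiGraph.

(* Main.v *)
Require Import Defs.
From Stdlib Require Import Relations.Relation_Operators Relations.Operators_Properties ClassicalEpsilon Classical.
From mathcomp Require Import all_boot.
From mathcomp Require Import zify.
Set Implicit Arguments. Unset Strict Implicit. Unset Printing Implicit Defensive.

Section Key.
Variables (V E : finType) (a b : E -> V) (C : {set E}).

Inductive dpath : V -> V -> nat -> Prop :=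
| dp0 x : dpath x x 0
| dpS e y m : e \in C -> dpath (b e) y m -> dpath (a e) y m.+1.

Inductive walk : V -> V -> nat -> Prop :=
| wk0 x : walk x x 0
| wkF e y n : e \in C -> walk (b e) y n -> walk (a e) y n.+1
| wkB e y n : e \in C -> walk (a e) y n -> walk (b e) y n.+1.

Hypothesis mod1 : forall e1 e2 : E, e1 <> e2 -> a e1 = a e2 ->
  exists f1 f2 : E, b f1 = b f2 /\ b e1 = a f1 /\ b e2 = a f2.
Hypothesis Dcl : forall e1 e2 f1 f2 : E, e1 \in C -> e2 \in C -> e1 <> e2 ->
  a e1 = a e2 -> b f1 = b f2 -> b e1 = a f1 -> b e2 = a f2 -> f1 \in C /\ f2 \in C.

Lemma key_step (u v : V) (nouv : forall k, ~ dpath u v k) L :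
  (forall m n x, m + n < L -> dpath x v m -> walk x u n -> exists e, e \in C /\ a e = v) ->
  forall m n x, m + n <= L -> dpath x v m -> walk x u n -> exists e, e \in C /\ a e = v.
Proof.
move=> IHL.
have Out : forall m n' x e, m + n' < L -> dpath x v m -> e \in C -> a e = x ->
    walk (b e) u n' -> exists e, e \in C /\ a e = v.
{ elim=> [|m IHm] n' x e Hl Hp He Hx Hw.
  - inversion Hp; subst. by exists e.
  - inversion Hp as [|e0 y m0 H1 H2 Hq]; subst.
    case: (eqVneq e e0) => [Heq|Hne].
    + subst e0. apply: (IHL m n' (b e)) => //; lia.
    + have Hne' : e0 <> e by move=> E'; rewrite E' eqxx in Hne.
      have [f1 [f2 [E1 [E2 E3]]]] := mod1 Hne' Hq.
      have [F1 F2] := Dcl H1 He Hne' Hq E1 E2 E3.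
      apply: (IHm n'.+1 (b e0) f1) => //; first lia.
      rewrite E1; apply: wkB => //; by rewrite -E3. }
move=> m0 n0; elim: n0 m0 => [|n IHn] m x Hl Hp Hw.
- exfalso; inversion Hw; subst; eapply nouv; eassumption.
- inversion Hw; subst.
  + apply: (Out m n (a e) e) => //; lia.
  + apply: (IHn m.+1 (a e)) => //; first lia. exact: dpS.
Qed.

Lemma key (u v : V) (nouv : forall k, ~ dpath u v k) m n x :
  dpath x v m -> walk x u n -> exists e, e \in C /\ a e = v.
Proof.
have : forall L m n x, m + n < L -> dpath x v m -> walk x u n -> exists e, e \in C /\ a e = v.
  elim=> [|L IHL] m' n' x'; first by [].
  move=> Hl; apply: (key_step nouv IHL); lia.
move=> HH; apply: (HH (m + n).+1); lia.
Qed.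

Lemma walk_of x y :
  clos_refl_trans V (fun x y => exists2 e, e \in C & ((a e = x /\ b e = y) \/ (a e = y /\ b e = x))) x y ->
  exists n, walk x y n.
Proof.
move=> Hc; have {Hc} := clos_rt_rt1n _ _ _ _ Hc; elim=> [z|p q r [e He [[<- <-]|[<- <-]]] _ [n Hw]].
- by exists 0; constructor.
- by exists n.+1; apply: wkF.
- by exists n.+1; apply: wkB.
Qed.

End Key.

Lemma crt_mono (T : Type) (R1 R2 : T -> T -> Prop) x y :
  (forall x y, R1 x y -> R2 x y) -> clos_refl_trans T R1 x y -> clos_refl_trans T R2 x y.
Proof.
move=> HR; elim=> [p q /HR H|p|p q r _ H1 _ H2].
- exact: rt_step.
- exact: rt_refl.
- exact: rt_trans H1 H2.
Qed.

Lemma ct_rev (T : Type) (R : T -> T -> Prop) x y :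
  clos_trans T R x y -> clos_trans T (fun p q => R q p) y x.
Proof.
elim=> [p q H|p q r _ H1 _ H2].
- exact: t_step.
- exact: t_trans H2 H1.
Qed.

Definition rb (V E : finType) (a b : E -> V) : rel V :=
  fun x y => [exists e, (a e == x) && (b e == y)].
Definition S (V E : finType) (a b : E -> V) (x : V) : {set V} :=
  [set y | connect (rb a b) x y].

Lemma connect_crt (V E : finType) (a b : E -> V) x y :
  connect (rb a b) x y -> clos_refl_trans V (dstep a b) x y.
Proof.
move/connectP=> [p Hp ->]; elim: p x Hp => [|z p IH] x /=.
- move=> _; exact: rt_refl.
- case/andP=> /existsP [e /andP [/eqP Ha /eqP Hb]] Hp.
  apply: rt_trans (IH _ Hp). apply: rt_step. by exists e.
Qed.

Lemma meas (V E : finType) (a b : E -> V) :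
  (forall v, ~ clos_trans V (dstep a b) v v) ->
  forall e, #|S a b (b e)| < #|S a b (a e)|.
Proof.
move=> Hac e; apply: proper_card; apply/properP; split.
- apply/subsetP=> y; rewrite !inE; apply: connect_trans.
  apply: connect1; apply/existsP; exists e; by rewrite !eqxx.
- exists (a e); first by rewrite inE connect0.
  rewrite inE; apply/negP=> /connect_crt Hc.
  apply: (Hac (b e)).
  apply: (clos_rt_t _ _ _ (a e)) => //.
  apply: t_step; by exists e.
Qed.

Lemma ct_mono (T : Type) (R1 R2 : T -> T -> Prop) x y :
  (forall x y, R1 x y -> R2 x y) -> clos_trans T R1 x y -> clos_trans T R2 x y.
Proof.
move=> HR; elim=> [p q /HR H|p q r _ H1 _ H2].
- exact: t_step.
- exact: t_trans H1 H2.
Qed.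

Definition pb (P : Prop) : bool := if excluded_middle_informative P then true else false.
Lemma pbP P : pb P <-> P.
Proof. rewrite /pb; case: excluded_middle_informative => //. Qed.

Section Main.
Variables (V E : finType) (t h : E -> V) (H : {set E}).
Hypotheses (Hac : acyclic t h) (Hmod : modular t h) (Hamp : ample t h H) (Hcon : connected t h H).
Variable u0 : V.
Hypothesis Hu0 : vert_of t h H u0.

Definition Cset := [set e | pb (in_completion t h H e)].

Lemma inC e : e \in Cset <-> in_completion t h H e.
Proof. rewrite inE; exact: pbP. Qed.

Lemma Ccomp : complete t h Cset.
Proof.
split.
- move=> e1 e2 f1 f2 /inC I1 /inC I2 Hne E1 E2 E3 E4; split; apply/inC => E0 HE0 HC;
  have [D U] := HC; have [G1 G2] := D e1 e2 f1 f2 (I1 E0 HE0 HC) (I2 E0 HE0 HC) Hne E1 E2 E3 E4 => //.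
- move=> e1 e2 f1 f2 /inC I1 /inC I2 Hne E1 E2 E3 E4; split; apply/inC => E0 HE0 HC;
  have [D U] := HC; have [G1 G2] := U e1 e2 f1 f2 (I1 E0 HE0 HC) (I2 E0 HE0 HC) Hne E1 E2 E3 E4 => //.
Qed.

Lemma HC : H \subset Cset.
Proof. apply/subsetP => e He; apply/inC => E0 /subsetP HE0 _; exact: HE0. Qed.

Lemma dp_reach u x k : dpath t h Cset u x k -> reach t h u x.
Proof.
elim=> [z|e y m _ _ IH]; first exact: rt_refl.
apply: rt_trans IH; apply: rt_step; by exists e.
Qed.

Lemma dp_reach_rev w x k : dpath h t Cset w x k -> reach t h x w.
Proof.
elim=> [z|e y m _ _ IH]; first exact: rt_refl.
apply: rt_trans IH _; apply: rt_step; by exists e.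
Qed.

Lemma ustepHC x y : ustep t h H x y -> ustep t h Cset x y.
Proof. case=> e He D; exists e => //; exact: (subsetP HC). Qed.

Lemma ustep_rev x y : ustep t h Cset x y -> ustep h t Cset x y.
Proof. case=> e He D; exists e => //; case: D => [[? ?]|[? ?]]; [right|left]; split => //. Qed.

Definition R x := clos_refl_trans V (ustep t h Cset) x u0.

Lemma RH x : vert_of t h H x -> R x.
Proof. move=> Hx; apply: (crt_mono ustepHC); exact: (Hcon.2 x u0 Hx Hu0). Qed.

Lemma Rto x u : R x -> vert_of t h H u -> clos_refl_trans V (ustep t h Cset) x u.
Proof. move=> Rx Hu; apply: rt_trans Rx _; apply: (crt_mono ustepHC); exact: (Hcon.2 u0 u Hu0 Hu). Qed.

Lemma outC x : R x -> ~ is_sink t x -> exists e, e \in Cset /\ t e = x.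
Proof.
move=> Rx Hs; have [u [Hu Hnr]] := Hamp.1 x Hs.
have [n Hw] := walk_of (Rto Rx Hu).
apply: (key (a:=t) (b:=h) (C:=Cset) Hmod.1 Ccomp.1 (u:=u) (v:=x) _ (dp0 _ _ _ x) Hw).
by move=> k /dp_reach.
Qed.

Lemma inC' x : R x -> ~ is_source h x -> exists e, e \in Cset /\ h e = x.
Proof.
move=> Rx Hs; have [w [Hw Hnr]] := Hamp.2 x Hs.
have [n Hwk] := walk_of (crt_mono ustep_rev (Rto Rx Hw)).
have mod2 : forall e1 e2 : E, e1 <> e2 -> h e1 = h e2 ->
    exists f1 f2 : E, t f1 = t f2 /\ t e1 = h f1 /\ t e2 = h f2.
  move=> e1 e2 Hne Heq; have [g1 [g2 [G1 [G2 G3]]]] := Hmod.2 e1 e2 Hne Heq.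
  by exists g1, g2.
have Dcl2 : forall e1 e2 f1 f2 : E, e1 \in Cset -> e2 \in Cset -> e1 <> e2 ->
    h e1 = h e2 -> t f1 = t f2 -> t e1 = h f1 -> t e2 = h f2 -> f1 \in Cset /\ f2 \in Cset.
  move=> e1 e2 f1 f2 I1 I2 Hne E1 E2 E3 E4.
  exact: (Ccomp.2 e1 e2 f1 f2 I1 I2 Hne E1 E2 (esym E3) (esym E4)).
apply: (key (a:=h) (b:=t) (C:=Cset) mod2 Dcl2 (u:=w) (v:=x) _ (dp0 _ _ _ x) Hwk).
by move=> k /dp_reach_rev.
Qed.

Lemma fwd N e : #|S t h (h e)| < N -> e \in Cset -> R (h e) ->
  exists s, path (consec t h) e s /\ is_sink t (h (last e s)) /\
            (forall x, x \in s -> x \in Cset).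
Proof.
elim: N e => [|N IH] e //.
move=> Hl He Hr; case: (classic (is_sink t (h e))) => Hs.
  by exists [::].
have [e' [He' Ht]] := outC Hr Hs.
have Hr' : R (h e').
  apply: rt_trans _ Hr; apply: rt_step; exists e' => //; right; split => //.
have Hl' : #|S t h (h e')| < N.
  have := meas Hac e'; rewrite Ht; lia.
have [s [Hp [Hsk Hin]]] := IH e' Hl' He' Hr'.
exists (e' :: s); split; first by rewrite /= Hp andbT /consec Ht eqxx.
split => // x; rewrite inE => /orP [/eqP -> //| /Hin //].
Qed.

Lemma Hac' : forall v, ~ clos_trans V (dstep h t) v v.
Proof.
move=> v Hc0; have Hc := ct_rev Hc0; apply: (Hac (ct_mono _ Hc)) => p q [e [E1 E2]]; by exists e.
Qed.

Lemma bwd N e : #|S h t (t e)| < N -> e \in Cset -> R (t e) ->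
  exists e1 s, path (consec t h) e1 s /\ last e1 s = e /\ is_source h (t e1) /\
            e1 \in Cset /\ (forall x, x \in s -> x \in Cset).
Proof.
elim: N e => [|N IH] e //.
move=> Hl He Hr; case: (classic (is_source h (t e))) => Hs.
  by exists e, [::].
have [e' [He' Ht]] := inC' Hr Hs.
have Hr' : R (t e').
  apply: rt_trans _ Hr; apply: rt_step; exists e' => //; left; split => //.
have Hl' : #|S h t (t e')| < N.
  have := meas Hac' e'; rewrite Ht; lia.
have [e1 [s [Hp [Hla [Hso [He1 Hin]]]]]] := IH e' Hl' He' Hr'.
exists e1, (rcons s e); split; first by rewrite rcons_path Hp Hla /consec Ht eqxx.
split; first by rewrite last_rcons.
do 2 split => //.
move=> x; rewrite mem_rcons inE => /orP [/eqP -> //| /Hin //].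
Qed.

Lemma main : sufficient t h H.
Proof.
have [e0 He0 _] := Hu0.
have He0C : e0 \in Cset by exact: (subsetP HC).
have Rt : R (t e0) by apply: RH; exists e0 => //; left.
have Rh : R (h e0) by apply: RH; exists e0 => //; right.
have [e1 [s1 [Hp1 [Hla [Hso [He1 Hin1]]]]]] := bwd (ltnSn _) He0C Rt.
have [s2 [Hp2 [Hsk Hin2]]] := fwd (ltnSn _) He0C Rh.
exists e1, (s1 ++ s2); split; first by rewrite cat_path Hp1 Hla Hp2.
split => //; split; first by rewrite last_cat Hla.
move=> x Hx; apply/inC.
move: Hx; rewrite inE mem_cat => /orP [/eqP -> //| /orP [/Hin1 | /Hin2] //].
Qed.

End Main.

Theorem theorem3p2p4 (V E : finType) (t h : E -> V) (H : {set E}) :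
  simple_graph t h -> acyclic t h -> modular t h ->
  ample t h H -> connected t h H ->
  sufficient t h H.
Proof.
move=> _ Hac Hmod Hamp Hcon.
have [[u0 Hu0] _] := Hcon.
exact: (main Hac Hmod Hamp Hcon Hu0).
Qed.
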